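(* Let $\mathbf{k}$ be a field, $p\ge3$ and $q\ge1$ integers, $S=\mathbf{k}[e_1,\dots,e_{qp}]$, and $L=\bigcap_{j=1}^{(q-1)p+1}\langle e_j,\dots,e_{j+p-2}\rangle$. Let $A'$ be the $(2q-1)\times((q-1)+(p-1)q)$ matrix with entries $A'_{i,j}=e_{pi+j-qp}$, where $e_0=1$ and $e_k=0$ for $k<0$ or $k>qp$. Let $B$ be any $(2q-1)\times(2q-1)$ submatrix of $A'$ (columns kept in their original order). Then (i) if the product $\prod_{i=1}^{2q-1}B_{i,2q-i}$ of the antidiagonal entries of $B$ is $0$, then $\det(B)=0$; and (ii) the product of the antidiagonal entries of $B$ lies in $L$. *)

(* Defs.v *)
From HB Require Import structures.
From mathcomp Require Import all_boot all_algebra.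
From mathcomp Require Import mpoly.

Set Implicit Arguments.
Unset Strict Implicit.
Unset Printing Implicit Defensive.

Import GRing.Theory.
Local Open Scope ring_scope.

(* The polynomial ring S = k[e_1,...,e_n] is {mpoly k[n]}; the variable e_m
   (1 <= m <= n) is 'X_(m-1). Convention of the paper: e_0 = 1 and e_m = 0 for
   m < 0 or m > n. *)
Definition evar (k : fieldType) (n : nat) (m : int) : {mpoly k[n]} :=
  match m with
  | Posz 0 => 1
  | Posz m'.+1 =>
      match (insub m' : option 'I_n) with Some i => 'X_i | None => 0 end
  | Negz _ => 0
  end.

Definition in_ideal (R : comNzRingType) (gens : seq R) (x : R) : Prop :=
  exists c : 'I_(size gens) -> R,
    x = \sum_(i < size gens) c i * gens`_i.

Definition in_L (k : fieldType) (p q : nat) (x : {mpoly k[q * p]}) : Prop :=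
  forall j : nat, (1 <= j <= (q - 1) * p + 1)%N ->
    in_ideal [seq evar k (q * p) (Posz (j + t)) | t <- iota 0 (p - 1)] x.

Definition Aprime (k : fieldType) (p q : nat) :
  'M[{mpoly k[q * p]}]_((2 * q).-1, (q - 1) + (p - 1) * q) :=
  \matrix_(i, j) evar k (q * p)
     ((p * i.+1 + j.+1)%N%:Z - (q * p)%N%:Z)%R.

(* Main.v *)
Require Import Defs.
From HB Require Import structures.
From mathcomp Require Import all_boot all_algebra.
From mathcomp Require Import mpoly.
From mathcomp Require Import fingroup perm zify.
Import GRing.Theory Num.Theory.
Local Open Scope ring_scope.

Lemma evar_out (k : fieldType) n (m : int) :
  (m < 0) || (n%:Z < m) -> evar k n m = 0.
Proof.
case: m => [[|m']|m'] //=.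
rewrite ltz_nat => /= h; rewrite insubN //; rewrite -leqNgt; lia.
Qed.

Lemma evar_neq0 (k : fieldType) n (m : int) :
  0 <= m -> m <= n%:Z -> evar k n m != 0.
Proof.
case: m => [[|m']|m'] //=; first by rewrite oner_neq0.
rewrite lez_nat => _ hm.
rewrite insubT /=.
apply/eqP => /(congr1 (mcoeff U_(Ordinal hm))).
rewrite mcoeffXU eqxx mcoeff0 => /eqP; by rewrite oner_eq0.
Qed.

Lemma evar_pos (k : fieldType) n (m : nat) (hm : (m < n)%N) :
  evar k n (Posz m.+1) = 'X_(Ordinal hm).
Proof. by rewrite /= insubT. Qed.
Lemma det_zero_block (R : comNzRingType) n (M : 'M[R]_n) (Rw C : {set 'I_n}) :
  (forall i j, i \in Rw -> j \in C -> M i j = 0) -> (n < #|Rw| + #|C|)%N -> \det M = 0.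
Proof.
move=> hz hc; rewrite /determinant; apply: big1 => s _.
have : (0 < #|((fun x => s x) @: Rw) :&: C|)%N.
  have := cardsUI ((fun x => s x) @: Rw) C; rewrite card_imset; last exact: perm_inj.
  have := max_card ((fun x => s x) @: Rw :|: C); rewrite card_ord. lia.
case/card_gt0P => x; rewrite inE => /andP [/imsetP [i iR ->] sC].
by rewrite (bigD1 i) //= hz // mul0r mulr0.
Qed.

Lemma card_lt n t : (t <= n)%N -> #|[set x : 'I_n | (x < t)%N]| = t.
Proof.
move=> tn.
have -> : [set x : 'I_n | (x < t)%N] = [set widen_ord tn y | y : 'I_t].
  apply/setP => x; rewrite inE; apply/idP/imsetP.
    by move=> xt; exists (Ordinal xt) => //; apply: val_inj.
  by case=> y _ ->; rewrite /= ltn_ord.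
by rewrite card_imset ?card_ord //; by move=> a b /(congr1 val) /= /val_inj.
Qed.

Lemma card_ge n t : (t <= n)%N -> #|[set x : 'I_n | (t <= x)%N]| = (n - t)%N.
Proof.
move=> tn.
have -> : [set x : 'I_n | (t <= x)%N] = ~: [set x : 'I_n | (x < t)%N].
  by apply/setP => x; rewrite !inE -leqNgt.
by rewrite cardsCs setCK card_lt // card_ord.
Qed.

Theorem proposition5p3 (k : fieldType) (p q : nat)
  (hp : (3 <= p)%N) (hq : (1 <= q)%N)
  (f : 'I_((2 * q).-1) -> 'I_((q - 1) + (p - 1) * q))
  (hf : forall x y : 'I_((2 * q).-1), (x < y)%N -> (f x < f y)%N) :
  let B := colsub f (Aprime k p q) in
  let adp := \prod_(i < (2 * q).-1) B i (rev_ord i) in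
  (adp = 0 -> \det B = 0) /\ @in_L k p q adp.
Proof.
move=> B adp.
have hn : (2 * q).-1 = (2 * q - 1)%N by rewrite subn1.
have Bij : forall x c, B x c = evar k (q * p)
   ((p * x.+1 + (f c).+1)%N%:Z - (q * p)%N%:Z) by move=> x c; rewrite /B !mxE.
have fmono : forall c d : 'I_((2 * q).-1), (c <= d)%N -> (f c <= f d)%N.
  move=> c d; rewrite leq_eqVlt => /orP [/eqP/val_inj -> // | /hf/ltnW //].
have fb : forall c, (f c < (q - 1) + (p - 1) * q)%N by move=> c; exact: ltn_ord.
split.
  move=> h0; have : adp == 0 by apply/eqP.
  case/prodf_eq0 => i _; rewrite Bij => /eqP hi.
  have hin := ltn_ord i.
  set a := (_ - _)%R in hi.
  have H := @evar_neq0 k (q * p) a; rewrite hi eqxx in H.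
  have [ha|ha] := ltrP a 0.
    apply: (@det_zero_block _ _ _ [set x : 'I_((2 * q).-1) | (x < i.+1)%N]
              [set c : 'I_((2 * q).-1) | (c < (2 * q).-1 - i)%N]).
      move=> x c; rewrite !inE => hx hc.
      have := fmono c (rev_ord i) ltac:(rewrite /=; lia).
      have := fb c; rewrite /a in ha.
      move=> _ hfc; rewrite Bij; apply: evar_out; apply/orP; left.
      have hm : (p * x.+1 <= p * i.+1)%N := leq_mul (leqnn p) hx. rewrite /= in hfc; lia.
    rewrite !card_lt; lia.
  have [hb|hb] := ltrP (q * p)%N%:Z a; last by move: H => /(_ ha hb).
  apply: (@det_zero_block _ _ _ [set x : 'I_((2 * q).-1) | (i <= x)%N]
              [set c : 'I_((2 * q).-1) | ((2 * q).-1 - i.+1 <= c)%N]).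
    move=> x c; rewrite !inE => hx hc.
    have := fmono (rev_ord i) c ltac:(rewrite /=; lia).
    rewrite /a in hb.
    move=> hfc; rewrite Bij; apply: evar_out; apply/orP; right.
    have hm : (p * i.+1 <= p * x.+1)%N := leq_mul (leqnn p) (hx : (i.+1 <= x.+1)%N). rewrite /= in hfc; lia.
  rewrite !card_ge; lia.
move=> j /andP [hj1 hj2].
pose a (x : 'I_((2 * q).-1)) : int :=
  (p * x.+1 + (f (rev_ord x)).+1)%N%:Z - (q * p)%N%:Z.
have hn0 : ((2 * q).-1.-1 < (2 * q).-1)%N by lia.
pose il := Ordinal hn0.
have Pl : (j%:Z <= a il)%R.
  rewrite /a /=.
  have hm : (p * (2 * q).-1.-1.+1 = p * (2 * q - 1))%N by congr (_ * _); lia.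
  rewrite hm; have : (p * (2 * q - 1) = p * q + p * (q - 1))%N.
    rewrite -mulnDr; congr (_ * _); lia.
  move=> ->; rewrite mulnC.
  have : (p * (q - 1) = (q - 1) * p)%N by rewrite mulnC.
  lia.
case: (@arg_minnP _ il (fun x => (j%:Z <= a x)%R) (fun x => val x) Pl) => i Pi imin.
have hin := ltn_ord i.
have hai : (a i <= (j + p - 2)%N%:Z)%R.
  case: (posnP i) => [i0 | ipos].
    rewrite /a /= i0 muln1.
    move: (fb (rev_ord i)); move: (nat_of_ord (f (rev_ord i))) => v hv.
    have E : ((p - 1) * q = p * q - q)%N by rewrite mulnBl mul1n.
    rewrite E in hv; have : (q <= p * q)%N by rewrite leq_pmull; lia.
    lia.
  have hi1 : (i.-1 < (2 * q).-1)%N by lia.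
  pose i' := Ordinal hi1.
  have nPi' : (a i' < j%:Z)%R.
    have [h|h] := ltrP (a i') j%:Z; first done. have := imin i' h; rewrite /=; lia.
  have hff : (f (rev_ord i) < f (rev_ord i'))%N by apply: hf => /=; lia.
  move: nPi'; rewrite /a /=.
  have : (p * i.-1.+1 = p * i)%N by congr (_ * _); lia.
  move=> ->; have : (p * i.+1 = p * i + p)%N by rewrite mulnS addnC.
  move=> ->; lia.
pose t := (`|a i|%N - j)%N.
have ht : (t < size [seq evar k (q * p) (Posz (j + t0)) | t0 <- iota 0 (p - 1)])%N.
  by rewrite size_map size_iota /t; move: Pi hai => /=; lia.
have hat : a i = Posz (j + t).
  by rewrite /t; move: Pi hai => /=; lia.
exists (fun u => if val u == t then \prod_(x | x != i) B x (rev_ord x) else 0).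
rewrite (bigD1 (Ordinal ht)) //= eqxx [X in _ + X]big1 ?addr0; last first.
  move=> u hu; case: (val u =P t) => [hut|_]; last by rewrite mul0r. by move: hu; rewrite -(inj_eq val_inj) /= hut eqxx.
rewrite (nth_map 0%N); last by move: ht; rewrite size_map.
rewrite nth_iota; last by move: ht; rewrite size_map size_iota.
rewrite add0n /adp (bigD1 i) //= mulrC Bij.
by move: hat; rewrite /a => ->.
Qed.
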